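(* Let $r>1$ and let $k,\ell,m$ be positive integers with $m\ge 12r$. Let $x_0\in R_1\cup\dots\cup R_\ell$ be a reservoir vertex of the $(k,\ell,m)$-superstar, and run the Moran process with fitness $r$ on the superstar with initial mutant $x_0$. Then the extinction probability is at least $1/(26r^2\ell)$.
   Context: Moran process: given a directed graph $G$ and fitness $r$, one vertex $x_0$ is a mutant, the rest non-mutants. At each step a vertex $v$ is chosen with probability proportional to fitness (mutants $r$, non-mutants $1$), an out-neighbour $w$ of $v$ is chosen uniformly at random and the state of $v$ is copied to $w$. Extinction: eventually no vertex is a mutant. The $(k,\ell,m)$-superstar has vertex set the disjoint union of reservoirs $R_1,\dots,R_\ell$ of size $m$, vertices $v_{i,j}$ ($i\in[\ell]$, $j\in[k]$), and a centre $v^*$; its edges are, for each $i\in[\ell]$: from $v^*$ to every vertex of $R_i$, from every vertex of $R_i$ to $v_{i,1}$, from $v_{i,j}$ to $v_{i,j+1}$ for $j\in[k-1]$, and from $v_{i,k}$ to $v^*$. *)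

(* Defs.v *)
From HB Require Import structures.
From mathcomp Require Import all_boot all_order all_algebra.
From mathcomp Require Import classical_sets reals.
Set Implicit Arguments. Unset Strict Implicit. Unset Printing Implicit Defensive.
Import Order.TTheory GRing.Theory Num.Theory.
Local Open Scope ring_scope.

Section Moran.
Variables (R : realType) (V : finType) (e : rel V) (r : R).

Definition fitness (S : {set V}) (v : V) : R := if v \in S then r else 1.

Definition total_fitness (S : {set V}) : R := \sum_(v : V) fitness S v.

Definition outdeg (v : V) : nat := #|[set w | e v w]|.

(* state after v reproduces onto w *)
Definition step_state (S : {set V}) (v w : V) : {set V} :=
  if v \in S then w |: S else S :\ w.

(* ext_by n S = probability that, starting from mutant set S, the
   Moran process has no mutant after n steps (= is extinct by time n,
   since the empty state is absorbing). *)
Fixpoint ext_by (n : nat) (S : {set V}) : R :=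
  match n with
  | 0%N => (S == finset.set0)%:R
  | n'.+1 => \sum_(v : V) \sum_(w | e v w)
              (fitness S v / total_fitness S) / (outdeg v)%:R
              * ext_by n' (step_state S v w)
  end.

(* extinction probability = probability of eventually reaching no mutants
   = supremum (limit) of the nondecreasing sequence ext_by n S. *)
Definition extinction_prob (S : {set V}) : R :=
  sup (range (fun n => ext_by n S)).

End Moran.

(* The (k,l,m)-superstar. Vertices:
   inl (inl (i,j)) : j-th vertex of reservoir R_{i+1}
   inl (inr (i,j)) : v_{i+1,j+1}
   inr tt          : centre v^* *)
Definition superstar_vertex (k l m : nat) : finType :=
  (('I_l * 'I_m) + ('I_l * 'I_k) + unit)%type.

Definition superstar_edge (k l m : nat) : rel (superstar_vertex k l m) :=
  fun u v =>
  match u, v with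
  | inr _, inl (inl _) => true
  | inl (inl (i, _)), inl (inr (i', j')) => (i == i') && (val j' == 0%N)
  | inl (inr (i, j)), inl (inr (i', j')) => (i == i') && (val j' == (val j).+1)
  | inl (inr (_, j)), inr _ => val j == k.-1
  | _, _ => false
  end.

(* Main.v *)
Require Import Defs.
From HB Require Import structures.
From mathcomp Require Import all_boot all_order all_algebra.
From mathcomp Require Import classical_sets reals.
From mathcomp Require Import ring lra zify.
Import Order.TTheory GRing.Theory Num.Theory.
Set Implicit Arguments. Unset Strict Implicit. Unset Printing Implicit Defensive.
Local Open Scope ring_scope.

Lemma fit_ge1 (R : realType) (V : finType) (r : R) (S : {set V}) (v : V) :
  1 <= r -> 1 <= fitness r S v.
Proof. by move=> hr; rewrite /fitness; case: ifP. Qed.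

Lemma fit_gt0 (R : realType) (V : finType) (r : R) (S : {set V}) (v : V) :
  1 <= r -> 0 < fitness r S v.
Proof. by move=> hr; apply: lt_le_trans ltr01 (fit_ge1 S v hr). Qed.

Lemma tf_ge (R : realType) (V : finType) (r : R) (S : {set V}) (v : V) :
  1 <= r -> fitness r S v <= total_fitness r S.
Proof.
move=> hr; rewrite /total_fitness (bigD1 v) //= lerDl.
by apply: sumr_ge0 => u _; apply: ltW; apply: fit_gt0.
Qed.

Lemma tf_gt0 (R : realType) (V : finType) (r : R) (S : {set V}) (v : V) :
  1 <= r -> 0 < total_fitness r S.
Proof. by move=> hr; apply: lt_le_trans (fit_gt0 S v hr) (tf_ge S v hr). Qed.

Lemma inner_const (V : finType) (e : rel V) (R : realType) v (c : R) :
  (0 < outdeg e v)%N -> \sum_(w | e v w) c / (outdeg e v)%:R = c.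
Proof.
move=> hd; rewrite sumr_const.
have -> : #|[pred w | e v w]| = outdeg e v by rewrite /outdeg cardsE.
rewrite -[X in X = c]mulr_natr -mulrA mulVf ?mulr1 //.
by rewrite pnatr_eq0 -lt0n.
Qed.

Lemma psum (R : realType) (V : finType) (r : R) (S : {set V}) (v0 : V) :
  1 <= r -> \sum_v fitness r S v / total_fitness r S = 1.
Proof.
move=> hr; rewrite -mulr_suml mulfV //.
by apply: lt0r_neq0; apply: (tf_gt0 S v0 hr).
Qed.

Lemma ext_bounds (R : realType) (V : finType) (e : rel V) (r : R) (v0 : V) :
  1 <= r -> (forall v, (0 < outdeg e v)%N) ->
  forall n (S : {set V}), 0 <= ext_by e r n S <= 1.
Proof.
move=> hr hd; elim=> [|n IH] S /=.
  by case: (S == finset.set0); rewrite ?ler01 ?lexx.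
apply/andP; split.
  apply: sumr_ge0 => v _; apply: sumr_ge0 => w _.
  apply: mulr_ge0; last by case/andP: (IH (step_state S v w)).
  apply: divr_ge0; last by apply: ler0n.
  by apply: divr_ge0; apply: ltW; [apply: fit_gt0|apply: (tf_gt0 S v0)].
rewrite -[X in _ <= X](psum S v0 hr); apply: ler_sum => v _.
rewrite -[X in _ <= X](inner_const _ (hd v)); apply: ler_sum => w _.
rewrite -[X in _ <= X]mulr1.
have HP : 0 <= fitness r S v / total_fitness r S / (outdeg e v)%:R.
  apply: divr_ge0; last by apply: ler0n.
  by apply: divr_ge0; apply: ltW; [apply: fit_gt0|apply: (tf_gt0 S v0)].
by apply: (ler_wpM2l HP); case/andP: (IH (step_state S v w)).
Qed.

Lemma ext_set0 (R : realType) (V : finType) (e : rel V) (r : R) (v0 : V) :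
  1 <= r -> (forall v, (0 < outdeg e v)%N) ->
  forall n, ext_by e r n finset.set0 = 1.
Proof.
move=> hr hd; elim=> [|n IH] /=; first by rewrite eqxx.
rewrite -[RHS](psum finset.set0 v0 hr); apply: eq_bigr => v _.
rewrite -[RHS](inner_const _ (hd v)); apply: eq_bigr => w _.
have -> : step_state finset.set0 v w = finset.set0.
  by rewrite /step_state inE; apply/setP => x; rewrite !inE andbF.
by rewrite IH mulr1.
Qed.

Lemma single (R : realType) (V : finType) (e : rel V) (r : R) (S T : {set V}) v n :
  (0 < outdeg e v)%N -> (forall w, e v w -> step_state S v w = T) ->
  \sum_(w | e v w) fitness r S v / total_fitness r S / (outdeg e v)%:R
      * ext_by e r n (step_state S v w) =
  fitness r S v / total_fitness r S * ext_by e r n T.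
Proof.
move=> hd hT; rewrite -[in RHS](inner_const (fitness r S v / total_fitness r S) hd).
rewrite mulr_suml; apply: eq_bigr => w ew; by rewrite hT.
Qed.

Lemma decomp (R : realType) (V : finType) (e : rel V) (r : R) (v0 : V)
  (S : {set V}) (D : pred V) n :
  1 <= r -> (forall v, (0 < outdeg e v)%N) ->
  (forall v, ~~ D v -> forall w, e v w -> step_state S v w = S) ->
  ext_by e r n.+1 S =
  (1 - \sum_(v | D v) fitness r S v / total_fitness r S) * ext_by e r n S +
  \sum_(v | D v) \sum_(w | e v w) fitness r S v / total_fitness r S
      / (outdeg e v)%:R * ext_by e r n (step_state S v w).
Proof.
move=> hr hd hD /=; rewrite (bigID D) /= addrC; congr (_ + _).
have -> : 1 - \sum_(v | D v) fitness r S v / total_fitness r S =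
          \sum_(v | ~~ D v) fitness r S v / total_fitness r S.
  by rewrite -(psum S v0 hr) (bigID D) /= addrC addrK.
rewrite mulr_suml; apply: eq_bigr => v nD.
by apply: single => // w ew; apply: hD.
Qed.

Lemma geom (R : realType) (c : R) n : 0 <= c <= 1 -> (1 - c) ^+ n * (1 + n%:R * c) <= 1.
Proof.
case/andP=> c0 c1; elim: n => [|n IH]; first by rewrite expr0 mul0r addr0 mulr1.
apply: le_trans IH; rewrite exprSr -mulrA ler_wpM2l //; first by apply: exprn_ge0; lra.
rewrite -natr1; have := ler0n R n; set N := n%:R; move=> hN. have h1 : 0 <= N * (c * c) by apply: mulr_ge0 => //; apply: mulr_ge0. have h2 : 0 <= c * c by apply: mulr_ge0. nra.
Qed.

Lemma chain (R : realType) (p q : nat -> R) (a b r e e0 t A B : R) :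
  0 < a -> a <= b -> 0 < e0 -> e0 <= e -> e0 <= 1 + r -> 0 <= r ->
  0 <= a - r - e -> 0 <= t -> 0 <= b - 1 - r - t ->
  0 <= e - (r + e) * A + r * B -> (1 + r) * B <= t * (A - B) ->
  A <= 1 -> B <= 1 -> 0 <= p 0 -> 0 <= q 0 ->
  (forall n, (a - r - e) * p n + r * q n + e <= a * p n.+1) ->
  (forall n, (b - 1 - r - t) * q n + t * p n <= b * q n.+1) ->
  forall n, A - (1 - e0 / b) ^+ n <= p n /\ B - (1 - e0 / b) ^+ n <= q n.
Proof.
move=> a0 ab e00 e0e e0r r0 c1 t0 c2 fA fB A1 B1 p0 q0 hp hq.
have b0 : 0 < b by apply: lt_le_trans ab.
have hrho : 0 <= 1 - e0 / b.
  rewrite subr_ge0 ler_pdivrMr // mul1r; apply: le_trans ab.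
  lra.
elim=> [|n [IHp IHq]]; first by rewrite expr0; split; lra.
set z := (1 - e0 / b) ^+ n in IHp IHq *.
have z0 : 0 <= z by apply: exprn_ge0.
rewrite exprSr -/z; split.
- rewrite -(ler_pM2l a0); apply: le_trans (hp n).
  have h1 : (a - r - e) * (A - z) <= (a - r - e) * p n by apply: ler_wpM2l.
  have h2 : r * (B - z) <= r * q n by apply: ler_wpM2l.
  have h3 : e0 * z <= e * z by apply: ler_wpM2r.
  have h4 : a / b * (e0 * z) <= e0 * z.
    rewrite -[X in _ <= X]mul1r; apply: ler_wpM2r; first by apply: mulr_ge0; lra.
    by rewrite ler_pdivrMr // mul1r.
  have -> : a * (A - z * (1 - e0 / b)) = a * A - a * z + a / b * (e0 * z).
    by rewrite mulrBr mulrBr mulr1 mulrBr; field; apply: lt0r_neq0.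
  lra.
- rewrite -(ler_pM2l b0); apply: le_trans (hq n).
  have h1 : (b - 1 - r - t) * (B - z) <= (b - 1 - r - t) * q n by apply: ler_wpM2l.
  have h2 : t * (A - z) <= t * p n by apply: ler_wpM2l.
  have h3 : e0 * z <= (1 + r) * z by apply: ler_wpM2r.
  have -> : b * (B - z * (1 - e0 / b)) = b * B - b * z + e0 * z.
    by field; apply: lt0r_neq0.
  lra.
Qed.

Lemma sumD_le1 (R : realType) (V : finType) (r : R) (S : {set V}) (v0 : V) (D : pred V) :
  1 <= r -> \sum_(v | D v) fitness r S v / total_fitness r S <= 1.
Proof.
move=> hr; rewrite -(psum S v0 hr) [X in _ <= X](bigID D) /= lerDl.
by apply: sumr_ge0 => v _; apply: divr_ge0; apply: ltW; [apply: fit_gt0|apply: (tf_gt0 S v0)].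
Qed.

Lemma sum2 (R : realType) (V : finType) (a b : V) (F : V -> R) :
  a != b -> \sum_(v | (v == a) || (v == b)) F v = F a + F b.
Proof.
move=> ab; rewrite (bigD1 a) ?eqxx //= (bigD1 b) /= ?eqxx ?orbT 1?eq_sym //.
rewrite big1 ?addr0 // => v /andP [/andP [/orP [] ->]]; by rewrite ?andbF.
Qed.

Lemma inner_ge0 (R : realType) (V : finType) (e : rel V) (r : R) (v0 : V) (S : {set V}) v n :
  1 <= r -> (forall v, (0 < outdeg e v)%N) ->
  0 <= \sum_(w | e v w) fitness r S v / total_fitness r S / (outdeg e v)%:R
      * ext_by e r n (step_state S v w).
Proof.
move=> hr hd; apply: sumr_ge0 => w _; apply: mulr_ge0.
  apply: divr_ge0; last by apply: ler0n.
  by apply: divr_ge0; apply: ltW; [apply: fit_gt0|apply: (tf_gt0 S v0)].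
by case/andP: (ext_bounds v0 hr hd n (step_state S v w)).
Qed.

Lemma term_ge0 (R : realType) (V : finType) (e : rel V) (r : R) (v0 : V) (S T : {set V}) v n :
  1 <= r -> (forall v, (0 < outdeg e v)%N) ->
  0 <= fitness r S v / total_fitness r S / (outdeg e v)%:R * ext_by e r n T.
Proof.
move=> hr hd; apply: mulr_ge0.
  apply: divr_ge0; last by apply: ler0n.
  by apply: divr_ge0; apply: ltW; [apply: fit_gt0|apply: (tf_gt0 S v0)].
by case/andP: (ext_bounds v0 hr hd n T).
Qed.
Lemma alg (R: realType) (r L M e e0 A B : R) : 1 <= r -> 1 <= L -> 1 <= M -> e0 <= e ->
  L * M * e0 = 1 -> 13 * (r * r * L) * A = 1 -> (M + r) * B = (M - 1) * A ->
  0 <= e - (r + e) * A + r * B.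
Proof.
move=> r1 L1 M1 ee hE hA hB.
have rL : 1 <= r * r * L.
  have : 1 <= r * r by nra.
  nra.
have A0 : 0 < A.
  nra.
have A13 : 13 * A <= 1 by nra.
have LM : 1 <= L * M by nra.
have e00 : 0 < e0 by nra.
have Mr : 0 < M + r by lra.
suff : 0 <= (M + r) * (e - (r + e) * A + r * B) by rewrite pmulr_rge0.
have -> : (M + r) * (e - (r + e) * A + r * B) = (M + r) * e * (1 - A) - r * (1 + r) * A.
  have -> : (M + r) * (e - (r + e) * A + r * B) = (M + r) * e * (1 - A) - r * (M + r) * A + r * ((M + r) * B) by ring.
  rewrite hB; ring.
have h1 : M * e0 * (1 - A) <= (M + r) * e * (1 - A).
  apply: ler_wpM2r; first lra.
  apply: ler_pM; lra.
have h2 : r * (1 + r) * A <= 2 * (r * r) * A.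
  apply: ler_wpM2r; nra.
have h3 : 13 * L * (M * e0) = 13 by nra.
have h4 : 13 * L * (2 * (r * r) * A) = 2 by nra.
have h5 : 12 <= 13 * L * (M * e0 * (1 - A)) by nra.
nra.
Qed.


Lemma aux_nat (x k : nat) : (0 < k)%N -> (x < k)%N -> x != k.-1 -> (x.+1 < k)%N.
Proof. by case: k => // k' _; rewrite /= ltnS leq_eqVlt => /orP [/eqP ->|]; rewrite ?eqxx. Qed.

Section SS.
Variables (k l m : nat) (hk : (0 < k)%N) (i : 'I_l) (j : 'I_m).
Let V := superstar_vertex k l m.
Let e := @superstar_edge k l m.
Definition x0 : V := inl (inl (i, j)).
Definition cen : V := inr tt.
Definition v1 : V := inl (inr (i, Ordinal hk)).

Lemma out_pos v : (0 < outdeg e v)%N.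
Proof.
rewrite /outdeg; apply/card_gt0P.
case: v => [[[i' j']|[i' j']]|[]].
- by exists (inl (inr (i', Ordinal hk)) : V); rewrite inE /e /= eqxx.
- case: (eqVneq (val j') k.-1) => hj.
  + by exists (inr tt : V); rewrite inE /e /= hj.
  + have hj2 : (j'.+1 < k)%N.
      move: (ltn_ord j') hj; exact: aux_nat.
    by exists (inl (inr (i', Ordinal hj2)) : V); rewrite inE /e /= !eqxx.
- by exists x0; rewrite inE.
Qed.

Lemma edge_x0 w : e x0 w -> w = v1.
Proof.
case: w => [[[i' j']|[i' j']]|[]] //=; rewrite /e /=.
by case/andP=> /eqP <- hj; congr (inl (inr (_, _))); apply: val_inj; apply/eqP.
Qed.

Lemma edge_into_x0 v : e v x0 -> v = cen.
Proof. by case: v => [[[i' j']|[i' j']]|[]]. Qed.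

Lemma edge_into_v1 v : e v v1 -> exists j', v = inl (inl (i, j')).
Proof.
case: v => [[[i' j']|[i' j']]|[]]; rewrite /e /= ?andbF //.
by case/andP=> /eqP -> _; exists j'.
Qed.

Lemma edge_cen_x0 : e cen x0.
Proof. by []. Qed.

Lemma outdeg_cen : (outdeg e cen <= l * m)%N.
Proof.
rewrite /outdeg.
have -> : [set w | e cen w] = [set (inl (inl p) : V) | p in [set: 'I_l * 'I_m]].
  apply/setP => w; rewrite inE; apply/idP/imsetP.
    by case: w => [[p|p]|[]] //= _; exists p; rewrite ?inE.
  by case=> p _ ->.
by apply: leq_trans (leq_imset_card _ _) _; rewrite cardsT card_prod !card_ord.
Qed.

Lemma edge_res i' j' w : e (inl (inl (i', j'))) w -> w = inl (inr (i', Ordinal hk)).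
Proof.
case: w => [[[i2 j2]|[i2 j2]]|[]] //=; rewrite /e /=.
by case/andP=> /eqP <- hj; congr (inl (inr (_, _))); apply: val_inj; apply/eqP.
Qed.

Lemma x0_neq_cen : x0 != cen. Proof. by []. Qed.
Lemma x0_neq_v1 : x0 != v1. Proof. by []. Qed.
Lemma cen_neq_v1 : cen != v1. Proof. by []. Qed.


Variables (R : realType) (r : R) (hr : 1 <= r).
Definition SA : {set V} := [set x0].
Definition SB : {set V} := v1 |: SA.
Let WA := total_fitness r SA.
Let WB := total_fitness r SB.
Let d : R := (outdeg e cen)%:R.

Lemma WA_gt0 : 0 < WA. Proof. exact: (tf_gt0 SA x0 hr). Qed.
Lemma WB_gt0 : 0 < WB. Proof. exact: (tf_gt0 SB x0 hr). Qed.

Lemma recA n :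
  WA * ext_by e r n.+1 SA =
  (WA - r - 1 / d) * ext_by e r n SA + r * ext_by e r n SB + 1 / d.
Proof.
rewrite (@decomp _ _ _ _ x0 _ [pred v | (v == x0) || (v == cen)]) //=; last 2 first.
- exact: out_pos.
- move=> v /norP [vx vc] w ew; rewrite /step_state inE (negbTE vx).
  apply/setP => u; rewrite !inE; case: (eqVneq u x0) => [->|]; rewrite ?andbT ?andbF //.
  by apply/eqP => wx; move: ew; rewrite -wx => /edge_into_x0; move/eqP: vc.
rewrite !sum2 ?x0_neq_cen //.
rewrite (@single _ _ _ _ _ SB x0) ?out_pos //; last first.
  by move=> w /edge_x0 ->; rewrite /step_state inE eqxx.
rewrite (bigD1 x0) ?edge_cen_x0 //=.
have -> : step_state SA cen x0 = finset.set0.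
  by rewrite /step_state inE /=; apply/setP => u; rewrite !inE; case: eqP.
rewrite (@ext_set0 _ _ _ _ x0 hr out_pos).
have Hrest : \sum_(w | e cen w && (w != x0))
    fitness r SA cen / total_fitness r SA / (outdeg e cen)%:R *
    ext_by e r n (step_state SA cen w) =
    (fitness r SA cen / total_fitness r SA -
     fitness r SA cen / total_fitness r SA / (outdeg e cen)%:R) * ext_by e r n SA.
  rewrite -[X in (X - _) * _](inner_const _ (out_pos cen)).
  rewrite [X in (X - _) * _](bigD1 x0) ?edge_cen_x0 //=.
  rewrite addrC addrK mulr_suml; apply: eq_bigr => w /andP [_ wx].
  congr (_ * _); congr (ext_by _ _ _ _); rewrite /step_state inE /=.
  by apply/setP => u; rewrite !inE; case: (eqVneq u x0) => [->|]; rewrite ?andbT ?andbF // eq_sym.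
rewrite Hrest /fitness !inE eqxx /=.
rewrite -/WA -/d.
have hW := WA_gt0.
have hd : 0 < d by rewrite /d ltr0n; apply: out_pos.
field; apply/andP; split; apply: lt0r_neq0 => //.
Qed.

Definition isres (v : V) : bool :=
  if v is inl (inl (i', j')) then (i' == i) && (j' != j) else false.
Let t : R := (#|[pred v | isres v]|)%:R.

Lemma isres_fit v : isres v -> fitness r SB v = 1.
Proof.
case: v => [[[i' j']|//]|//] /= /andP [/eqP -> hj].
rewrite /fitness !inE /= ifN // /x0; apply/eqP => -[] /eqP; by rewrite (negbTE hj).
Qed.

Lemma predD_eq v : [&& ((v == cen) || (v == v1) || isres v), (v != cen) & (v != v1)] = isres v.
Proof. case: v => [[[i' j']|[i' j']]|[]] //=; first by case: (i' == i); case: (j' != j). by case: (_ == v1). Qed.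

Lemma sumDB : \sum_(v | (v == cen) || (v == v1) || isres v) fitness r SB v / total_fitness r SB
    = (1 + r + t) / WB.
Proof.
rewrite (bigD1 cen) //= (bigD1 v1) /=; last by rewrite eqxx.
rewrite (eq_bigl (fun v => isres v)); last by move=> v; rewrite -andbA predD_eq.
rewrite (eq_bigr (fun _ => 1 / WB)); last by move=> v hv; rewrite isres_fit.
rewrite sumr_const /t /fitness !inE /= eqxx /= -/WB.
rewrite -[_ *+ _]mulr_natr; field; exact: lt0r_neq0 WB_gt0.
Qed.

Lemma recB n :
  (WB - 1 - r - t) * ext_by e r n SB + t * ext_by e r n SA <= WB * ext_by e r n.+1 SB.
Proof.
rewrite (@decomp _ _ _ _ x0 _ [pred v | (v == cen) || (v == v1) || isres v]) //=; last 2 first.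
- exact: out_pos.
- move=> v /norP [/norP [vc vv1] nres] w ew.
  case: (eqVneq v x0) => [vx|vx].
    move: ew; rewrite vx => /edge_x0 ->; rewrite /step_state !inE eqxx /=.
    by apply/setP => u; rewrite !inE; case: (eqVneq u v1).
  rewrite /step_state !inE (negbTE vx) (negbTE vv1) /=.
  have wx : w != x0.
    by apply/eqP => wx; move: ew; rewrite wx => /edge_into_x0; move/eqP: vc.
  have wv : w != v1.
    apply/eqP => wv; move: ew; rewrite wv => /edge_into_v1 [j' vj].
    move: nres vx; rewrite vj /= eqxx /= negbK => /eqP ->; by rewrite eqxx.
  apply/setP => u; rewrite !inE; case: (eqVneq u w) => [->|]; last by [].
  by rewrite (negbTE wx) (negbTE wv).
have eqD := sumDB.
have geD : t / WB * ext_by e r n SA <=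
    \sum_(v | (v == cen) || (v == v1) || isres v) \sum_(w | e v w)
      fitness r SB v / total_fitness r SB / (outdeg e v)%:R *
      ext_by e r n (step_state SB v w).
  rewrite (bigD1 cen) //= [X in _ <= _ + X](bigD1 v1) /=; last by rewrite eqxx.
  rewrite [X in _ <= _ + (_ + X)](eq_bigl (fun v => isres v)); last by move=> v; rewrite -andbA predD_eq.
  have -> : \sum_(v | isres v) \sum_(w | e v w)
      fitness r SB v / total_fitness r SB / (outdeg e v)%:R *
      ext_by e r n (step_state SB v w) = t / WB * ext_by e r n SA.
    rewrite (eq_bigr (fun _ => 1 / WB * ext_by e r n SA)).
      rewrite sumr_const /t -[_ *+ _]mulr_natr mulrC !mulrA mulr1.
      by rewrite [_ / WB]mulrC.
    move=> v hv; rewrite (@single _ _ _ _ _ SA) ?out_pos ?isres_fit //.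
    move: hv; case: v => [[[i' j']|//]|//] /= /andP [/eqP -> hj] w /edge_res ->.
    rewrite /step_state !inE /= ifN; last first.
      rewrite /x0 /v1.
      apply/eqP => -[] /eqP; by rewrite (negbTE hj).
    by apply/setP => u; rewrite !inE; case: (eqVneq u v1) => [->|].
  exact: j.
  rewrite -[X in X <= _]add0r; apply: lerD; first by apply: sumr_ge0 => w _; apply: (term_ge0 x0 _ _ _ _ hr out_pos).
  rewrite -[X in X <= _]add0r; apply: lerD => //; first by apply: sumr_ge0 => w _; apply: (term_ge0 x0 _ _ _ _ hr out_pos).
have hW := WB_gt0.
have E2 : t * ext_by e r n SA = WB * (t / WB * ext_by e r n SA).
  by field; apply: lt0r_neq0.
rewrite eqD mulrDr; apply: lerD; last by rewrite E2; apply: (ler_wpM2l (ltW hW)).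
have -> : WB * ((1 - (1 + r + t) / WB) * ext_by e r n SB) =
          (WB - 1 - r - t) * ext_by e r n SB.
  by field; apply: lt0r_neq0.
by [].
Qed.

Lemma WA_ge : r + 1 <= WA.
Proof.
have := sumD_le1 SA x0 [pred v | (v == x0) || (v == cen)] hr.
rewrite sum2 ?x0_neq_cen // /fitness !inE eqxx /= -/WA -mulrDl.
by rewrite ler_pdivrMr ?WA_gt0 // mul1r.
Qed.

Lemma WB_ge : 1 + r + t <= WB.
Proof.
have := sumD_le1 SB x0 [pred v | (v == cen) || (v == v1) || isres v] hr.
by rewrite sumDB ler_pdivrMr ?WB_gt0 // mul1r.
Qed.

Lemma WA_le_WB : WA <= WB.
Proof.
apply: ler_sum => v _; rewrite /fitness; case: ifP => hv.
  by rewrite /SB inE hv orbT.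
case: ifP => _ //; lra.
Qed.

Lemma t_ge : m%:R - 1 <= t.
Proof.
have h1 : (m.-1 <= #|[pred v | isres v]|)%N.
  have <- : #|[set (inl (inl (i, j')) : V) | j' in [set~ j]]| = m.-1.
    by rewrite card_imset ?cardsC1 ?card_ord // => a b [->].
  apply: subset_leq_card; apply/fintype.subsetP => v /imsetP [j' hj' ->].
  by rewrite inE /= eqxx /=; rewrite !inE in hj'.
have h2 : (m <= m.-1.+1)%N by case: m.
apply: (@le_trans _ _ (m.-1)%:R); last by rewrite ler_nat.
by rewrite lerBlDr natr1 ler_nat.
Qed.

Lemma d_bounds : 1 <= d /\ d <= l%:R * m%:R.
Proof.
split; first by rewrite /d ler1n; apply: out_pos.
by rewrite /d -natrM ler_nat; apply: outdeg_cen.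
Qed.

End SS.


Ltac nz := repeat (apply/andP; split); apply: lt0r_neq0; rewrite ?ltr0n //; lra.

Theorem lemma4p3 (R : realType) (k l m : nat) (r : R)
  (hk : (0 < k)%N) (hl : (0 < l)%N) (hm : (0 < m)%N)
  (hr : 1 < r) (hm12 : 12 * r <= m%:R)
  (i : 'I_l) (j : 'I_m) :
  1 / (26 * r ^+ 2 * l%:R) <=
    extinction_prob (@superstar_edge k l m) r
      [set (inl (inl (i, j)) : superstar_vertex k l m)].
Proof.
have hr1 : 1 <= r by apply: ltW.
have hd := @out_pos k l m hk i j.
pose e := @superstar_edge k l m.
pose p n := ext_by e r n (SA k i j).
pose q n := ext_by e r n (SB hk i j).
pose WA := total_fitness r (SA k i j).
pose WB := total_fitness r (SB hk i j).
pose d : R := (outdeg e (cen k l m))%:R.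
pose t : R := (#|[pred v | isres (k:=k) i j v]|)%:R.
pose L : R := l%:R.
pose M : R := m%:R.
have [d1 dLM] : 1 <= d /\ d <= L * M := d_bounds hk i j R.
have L1 : 1 <= L by rewrite /L ler1n.
have M1 : 1 <= M by rewrite /M ler1n.
pose A : R := 1 / (13 * (r * r * L)).
pose B : R := (M - 1) * A / (M + r).
pose e1 : R := 1 / d.
pose e0 : R := 1 / (L * M).
have hWAge : r + 1 <= WA := WA_ge k i j hr1.
have hWBge : 1 + r + t <= WB := WB_ge hk i j hr1.
have hWAB : WA <= WB := WA_le_WB hk i j hr1.
have ht : M - 1 <= t := t_ge k i j R.
have d0 : 0 < d by lra.
have LM0 : 0 < L * M by apply: mulr_gt0; lra.
have Mr0 : 0 < M + r by lra.
have rrL : 0 < r * r * L by apply: mulr_gt0; [apply: mulr_gt0|]; lra.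
have hA : 13 * (r * r * L) * A = 1. by rewrite /A; field; nz.
have hB : (M + r) * B = (M - 1) * A by rewrite /B; field; nz.
have hE : L * M * e0 = 1 by rewrite /e0; field; nz.
have A0 : 0 < A by rewrite /A divr_gt0 //; apply: mulr_gt0 => //; lra.
have e1le : e1 <= 1 by rewrite /e1 ler_pdivrMr // mul1r.
have e0e1 : e0 <= e1.
  rewrite /e0 /e1 ler_pdivrMr // mul1r mulrC ler_pdivlMr //; lra.
have e00 : 0 < e0 by rewrite /e0 divr_gt0.
have e0le : e0 <= 1 by rewrite /e0 ler_pdivrMr // mul1r; nra.
have fA : 0 <= e1 - (r + e1) * A + r * B.
  by apply: (@alg _ r L M e1 e0 A B).
have AB : A - B = (1 + r) * A / (M + r) by rewrite /B; field; nz.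
have fB : (1 + r) * B <= t * (A - B).
  have -> : (1 + r) * B = (M - 1) * (A - B) by rewrite AB /B; field; nz.
  apply: ler_wpM2r => //; rewrite AB; apply: divr_ge0; last lra.
  apply: mulr_ge0; lra.
have BA : B <= A.
  have : 0 <= A - B by rewrite AB; apply: divr_ge0; [apply: mulr_ge0|]; lra.
  lra.
have A1 : A <= 1.
  have : 1 <= r * r * L by nra.
  nra.
have hbnd := ext_bounds (x0 k i j) hr1 hd.
have c1 : 0 < WA by lra.
have c2 : e0 <= 1 + r by lra.
have c3 : 0 <= r by lra.
have c4 : 0 <= WA - r - e1 by lra.
have c5 : 0 <= t by apply: ler0n.
have c6 : 0 <= WB - 1 - r - t by lra.
have c7 : B <= 1 by lra.
have c8 : 0 <= p 0%N by case/andP: (hbnd 0%N (SA k i j)).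
have c9 : 0 <= q 0%N by case/andP: (hbnd 0%N (SB hk i j)).
have hp : forall n, (WA - r - e1) * p n + r * q n + e1 <= WA * p n.+1.
  by move=> n; rewrite /p /WA recA.
have hq : forall n, (WB - 1 - r - t) * q n + t * p n <= WB * q n.+1.
  by move=> n; apply: recB.
have Hc := chain c1 hWAB e00 e0e1 c2 c3 c4 c5 c6 fA fB A1 c7 c8 c9 hp hq.
pose c := e0 / WB.
have WB0 : 0 < WB by lra.
have c0 : 0 < c by rewrite /c divr_gt0.
have cle : c <= 1 by rewrite /c ler_pdivrMr // mul1r; lra.
pose n := Num.Def.archi_bound (2 / (A * c)).
have hn : 2 / (A * c) < n%:R by apply: archi_boundP; apply: divr_ge0 => //; apply: mulr_ge0; lra.
have hg := @geom R c n ltac:(by rewrite cle (ltW c0)).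
have x0' : 0 <= (1 - c) ^+ n by apply: exprn_ge0; rewrite subr_ge0.
have nc : 2 / A <= n%:R * c.
  have -> : 2 / A = 2 / (A * c) * c.
    by field; rewrite (lt0r_neq0 A0) (lt0r_neq0 c0).
  by apply: ler_wpM2r; [apply: ltW | apply: ltW].
have n0 : 0 <= n%:R * c by apply: mulr_ge0; [apply: ler0n | apply: ltW].
have xA : (1 - c) ^+ n <= A / 2.
  have h2A' : A / 2 * (2 / A) = 1 by field; rewrite (lt0r_neq0 A0).
  have hx : (1 - c) ^+ n * (2 / A) <= 1.
    apply: le_trans hg; apply: ler_wpM2l => //.
    by rewrite -[X in X <= _]add0r lerD.
  have pA : 0 < 2 / A by apply: divr_gt0.
  rewrite -(ler_pM2r pA); apply: le_trans hx _.
  by rewrite h2A'.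
have [Hpn _] := Hc n.
have targ : 1 / (26 * r ^+ 2 * l%:R) = A / 2.
  rewrite /A /L; field.
  by rewrite (lt0r_neq0 (lt_le_trans ltr01 L1)) (lt0r_neq0 (lt_trans ltr01 hr)).
rewrite targ.
apply: (@le_trans _ _ (p n)).
  apply: le_trans Hpn.
  have hh : A - A / 2 = A / 2 by field.
  by rewrite -{1}hh; apply: lerB.
apply: ub_le_sup; last by exists n.
exists 1 => y [n' _ <-].
by case/andP: (hbnd n' (SA k i j)).
Qed.
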